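(* Let $\Omega\subset\mathbb{R}^2$ be open and bounded with Lipschitz boundary, let $f\in L^\infty(\Omega)$, $\lambda_1,\lambda_2>0$, and let $$\mathcal{A}=\{u\in L^1(\Omega):\ \log u\in L^1(\Omega)\},\qquad \mathcal{B}=\{v\in L^2(\Omega):\ v\le f \text{ a.e.}\}.$$ Let $u\in BV(\Omega)\cap\mathcal{A}$. Then the minimisation problem $$\inf_{v\in L^2(\Omega)\cap\mathcal{B}}\Big\{\frac{\lambda_1}{2}\|v\|_{L^2(\Omega)}^2+\lambda_2\, D_{KL}(f-v,u)\Big\}$$ admits a minimiser, and this minimiser is unique.
   Context: For nonnegative $\varphi,\psi\in L^1(\Omega)$ the Kullback–Leibler functional is $D_{KL}(\varphi,\psi)=\int_\Omega\big(\psi-\varphi+\varphi\log(\varphi/\psi)\big)\,dx\in[0,+\infty]$, with the convention $0\log 0=0$. Note that $u\in\mathcal{A}$ forces $u\ge 0$ a.e. (so that $\log u$ is defined). $BV(\Omega)$ denotes the space of functions of bounded variation. *)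

(* Defs.v *)
From HB Require Import structures.
From mathcomp Require Import all_boot all_order all_algebra.
From mathcomp Require Import all_classical all_reals all_analysis.
Set Implicit Arguments. Unset Strict Implicit. Unset Printing Implicit Defensive.
Import Order.TTheory GRing.Theory Num.Theory.
Import numFieldNormedType.Exports.
Local Open Scope classical_set_scope.
Local Open Scope ring_scope.

Definition leb2 (R : realType) := ((@lebesgue_measure R) \x (@lebesgue_measure R))%E.
Arguments leb2 R : clear implicits.

Definition bounded2 (R : realType) (O : set (R * R)) : Prop :=
  exists M : R, forall x, O x -> `|x.1| <= M /\ `|x.2| <= M.

Definition lipschitz1 (R : realType) (g : R -> R) : Prop :=
  exists L : R, forall a b, `|g a - g b| <= L * `|a - b|.

Definition boundary2 (R : realType) (O : set (R * R)) : set (R * R) :=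
  closure O `\` interior O.

(** Lipschitz boundary: near each boundary point p, after a rotation of
   coordinates centred at p, O coincides (in a Euclidean ball around p) with
   the open region strictly above the graph of a Lipschitz function. *)
Definition lipschitz_boundary (R : realType) (O : set (R * R)) : Prop :=
  forall p, boundary2 O p ->
  exists (r theta : R) (g : R -> R), 0 < r /\ lipschitz1 g /\
    forall x : R * R, (x.1 - p.1) ^+ 2 + (x.2 - p.2) ^+ 2 < r ^+ 2 ->
      (O x <-> g (cos theta * (x.1 - p.1) + sin theta * (x.2 - p.2))
               < - sin theta * (x.1 - p.1) + cos theta * (x.2 - p.2)).

Definition L1 (R : realType) (O : set (R * R)) (h : R * R -> R) : Prop :=
  (leb2 R).-integrable O (EFin \o h).

Definition L2 (R : realType) (O : set (R * R)) (h : R * R -> R) : Prop :=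
  measurable_fun O h /\ (\int[leb2 R]_(x in O) ((h x) ^+ 2)%:E < +oo)%E.

Definition Linf (R : realType) (O : set (R * R)) (h : R * R -> R) : Prop :=
  measurable_fun O h /\
  exists M : R, {ae leb2 R, forall x, O x -> `|h x| <= M}.

Definition d1 (R : realType) (h : R * R -> R) (x : R * R) : R := 'D_((1 : R), (0 : R)) h x.
Definition d2 (R : realType) (h : R * R -> R) (x : R * R) : R := 'D_((0 : R), (1 : R)) h x.

Definition C1 (R : realType) (h : R * R -> R) : Prop :=
  (forall x, differentiable h x) /\ continuous (d1 h) /\ continuous (d2 h).

Definition test_field (R : realType) (O : set (R * R)) (p1 p2 : R * R -> R) : Prop :=
  C1 p1 /\ C1 p2 /\
  compact (closure [set x | p1 x != 0 \/ p2 x != 0]) /\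
  closure [set x | p1 x != 0 \/ p2 x != 0] `<=` O /\
  (forall x, p1 x ^+ 2 + p2 x ^+ 2 <= 1).

Definition BV (R : realType) (O : set (R * R)) (u : R * R -> R) : Prop :=
  L1 O u /\
  exists C : R, forall p1 p2, test_field O p1 p2 ->
    (\int[leb2 R]_(x in O) (u x * (d1 p1 x + d2 p2 x))%:E <= C%:E)%E.

(** The class A = { u in L^1 : log u in L^1 } (log u finite a.e. forces u > 0 a.e.). *)
Definition classA (R : realType) (O : set (R * R)) (u : R * R -> R) : Prop :=
  L1 O u /\ {ae leb2 R, forall x, O x -> 0 < u x} /\ L1 O (fun x => ln (u x)).

Definition classB (R : realType) (O : set (R * R)) (f v : R * R -> R) : Prop :=
  L2 O v /\ {ae leb2 R, forall x, O x -> v x <= f x}.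

Definition kl_integrand (R : realType) (phi psi : R * R -> R) (x : R * R) : \bar R :=
  if phi x == 0 then (psi x)%:E
  else if psi x == 0 then +oo%E
  else (psi x - phi x + phi x * ln (phi x / psi x))%:E.

Definition DKL (R : realType) (O : set (R * R)) (phi psi : R * R -> R) : \bar R :=
  (\int[leb2 R]_(x in O) kl_integrand phi psi x)%E.

Definition energy (R : realType) (O : set (R * R)) (f u : R * R -> R)
    (l1 l2 : R) (v : R * R -> R) : \bar R :=
  ((l1 / 2)%:E * (\int[leb2 R]_(x in O) ((v x) ^+ 2)%:E)
   + l2%:E * DKL O (fun x => (f x - v x)%R) u)%E.

(* Main.v *)
Require Import Defs.
From HB Require Import structures.
From mathcomp Require Import all_boot all_order all_algebra.
From mathcomp Require Import all_classical all_reals all_analysis.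
From mathcomp Require Import ring lra measurable_realfun.
Import Order.TTheory GRing.Theory Num.Theory.
Import numFieldNormedType.Exports.
Local Open Scope classical_set_scope.
Local Open Scope ring_scope.
Section Pt.
Variable R : realType.
Variables l1 l2 : R.
Hypotheses (l10 : 0 < l1) (l20 : 0 < l2).

Definition phiv (F U v : R) := l1 * v - l2 * ln ((F - v) / U).

Lemma phiv_lt F U v w : 0 < U -> v < w -> w < F -> phiv F U v < phiv F U w.
Proof.
move=> U0 vw wF; rewrite /phiv.
have h1 : ln ((F - w) / U) < ln ((F - v) / U).
  have p1 : 0 < (F - v) / U by rewrite divr_gt0 // subr_gt0 (lt_trans vw).
  have p2 : 0 < (F - w) / U by rewrite divr_gt0 // subr_gt0.
  rewrite ltr_ln ?posrE //.
  by rewrite ltr_pM2r ?invr_gt0 // ltrD2l ltrN2.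
have h2 : l1 * v < l1 * w by rewrite ltr_pM2l.
have h3 : l2 * ln ((F - w) / U) < l2 * ln ((F - v) / U) by rewrite ltr_pM2l.
lra.
Qed.

Lemma phiv_cont F U v : 0 < U -> v < F -> {for v, continuous (phiv F U)}.
Proof.
move=> U0 vF; rewrite /phiv.
apply: continuousB.
  by apply: continuousM; [exact: cst_continuous|exact: (fun x => @cvg_id _ (nbhs x))].
apply: continuousM; first exact: cst_continuous.
have := @continuous_comp _ _ _ (fun v => (F - v) / U) (@ln R) v; apply.
  apply: continuousM; last exact: cst_continuous.
  by apply: continuousB; [exact: cst_continuous|exact: (fun x => @cvg_id _ (nbhs x))].
by apply: continuous_ln; rewrite divr_gt0 // subr_gt0.
Qed.

Lemma phiv_root F U : 0 < U -> exists r, r < F /\ phiv F U r = 0.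
Proof.
move=> U0.
pose a := Num.min (F - U) 0 - 1.
pose c := l1 * (F - 1) / l2.
pose de := Num.min 1 (U * expR c / 2).
pose b := F - de.
have de0 : 0 < de by rewrite /de lt_min ltr01 /= divr_gt0 // mulr_gt0 // expR_gt0.
have de1 : de <= 1 by rewrite /de ge_min lexx.
have ab : a <= b.
  rewrite /a /b; have : Num.min (F - U) 0 <= F - U by rewrite ge_min lexx.
  lra.
have pa : phiv F U a < 0.
  rewrite /phiv.
  have a0 : a < 0.
    rewrite /a; have : Num.min (F - U) 0 <= 0 by rewrite ge_min lexx orbT.
    lra.
  have : 0 < ln ((F - a) / U).
    apply: ln_gt0; rewrite ltr_pdivlMr // mul1r /a.
    have : Num.min (F - U) 0 <= F - U by rewrite ge_min lexx.
    lra.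
  move=> h; have : 0 < l2 * ln ((F - a) / U) by rewrite mulr_gt0.
  have : l1 * a < 0 by rewrite pmulr_rlt0.
  lra.
have pb : 0 < phiv F U b.
  rewrite /phiv /b.
  have -> : F - (F - de) = de by ring.
  have h1 : de / U < expR c.
    rewrite ltr_pdivrMr //.
    have : de <= U * expR c / 2 by rewrite /de ge_min lexx orbT.
    have : 0 < U * expR c by rewrite mulr_gt0 // expR_gt0.
    lra.
  have h2 : ln (de / U) < c.
    rewrite -[X in _ < X]expRK ltr_ln ?posrE ?expR_gt0 ?divr_gt0 //.
  have h3 : l2 * ln (de / U) < l2 * c by rewrite ltr_pM2l.
  have h4 : l2 * c = l1 * (F - 1) by rewrite /c mulrCA mulfV ?mulr1 // gt_eqF.
  have h5 : l1 * (F - 1) <= l1 * (F - de) by rewrite ler_pM2l // lerD2l lerN2.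
  lra.
have := @IVT R (phiv F U) a b 0 ab.
case.
- apply: continuous_in_subspaceT => x; rewrite inE /= in_itv /= => /andP[_ xb].
  apply: phiv_cont => //; apply: (le_lt_trans xb); rewrite /b; lra.
- by apply/andP; split; [rewrite ge_min; apply/orP; left|rewrite le_max; apply/orP; right]; apply: ltW.
move=> r; rewrite in_itv /= => /andP[_ rb] pr; exists r; split => //.
by apply: (le_lt_trans rb); rewrite /b; lra.
Qed.

Definition rootv (F U : R) : R :=
  match pselect (exists r, r < F /\ phiv F U r = 0) with
  | left h => projT1 (cid h)
  | right _ => F end.

Lemma rootvP F U : 0 < U -> rootv F U < F /\ phiv F U (rootv F U) = 0.
Proof.
move=> U0; rewrite /rootv; case: pselect => [h|]; last by move: (@phiv_root F U U0).
exact: (projT2 (cid h)).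
Qed.

Lemma rootv_le F U : rootv F U <= F.
Proof.
rewrite /rootv; case: pselect => [h|_ //]; exact/ltW/(proj1 (projT2 (cid h))).
Qed.

Lemma rootv_gt F U a : 0 < U -> a < F -> (a < rootv F U) = (phiv F U a < 0).
Proof.
move=> U0 aF; have [rF pr] := @rootvP F U U0.
apply/idP/idP => [ar|pa]; first by rewrite -pr; exact: (@phiv_lt F U a (rootv F U)).
rewrite ltNge; apply/negP; rewrite le_eqVlt => /orP[/eqP ra|ra].
  by move: pa; rewrite -ra pr ltxx.
have := @phiv_lt F U _ _ U0 ra aF; rewrite pr; lra.
Qed.

End Pt.
Section Pt2.
Variable R : realType.

Lemma ln_le_sub1 (x : R) : 0 < x -> ln x <= x - 1.
Proof.
move=> x0; have := expR_ge1Dx (ln x); rewrite lnK ?posrE //; lra.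
Qed.

Definition kr (t U : R) := if t == 0 then U else U - t + t * ln (t / U).

Lemma kr_ge0 t U : 0 < U -> 0 <= t -> 0 <= kr t U.
Proof.
move=> U0 t0; rewrite /kr; case: eqP => [_|/eqP tn0]; first exact: ltW.
have tp : 0 < t by rewrite lt_neqAle eq_sym tn0.
have h : ln (t / U) = - ln (U / t).
  by rewrite -lnV ?posrE ?divr_gt0 // invf_div.
have := ln_le_sub1 _ (divr_gt0 U0 tp).
rewrite h => hl.
have : t * ln (U / t) <= t * (U / t - 1) by rewrite ler_pM2l.
rewrite mulrBr mulr1 mulrCA mulfV ?mulr1 ?gt_eqF //.
lra.
Qed.

Variables l1 l2 : R.
Hypotheses (l10 : 0 < l1) (l20 : 0 < l2).

Lemma key_ineq F U r w : 0 < U -> r < F -> @phiv R l1 l2 F U r = 0 -> w <= F ->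
  l1 / 2 * r ^+ 2 + l2 * kr (F - r) U + l1 / 2 * (w - r) ^+ 2
  <= l1 / 2 * w ^+ 2 + l2 * kr (F - w) U.
Proof.
move=> U0 rF pr wF; rewrite /phiv in pr.
set s := F - r; set t := F - w.
have s0 : 0 < s by rewrite /s subr_gt0.
have t0 : 0 <= t by rewrite /t subr_ge0.
set L := ln (s / U).
have Hr : l1 * r = l2 * L by rewrite /L /s; lra.
have Hq : l1 / 2 * w ^+ 2 - l1 / 2 * r ^+ 2 - l1 / 2 * (w - r) ^+ 2
   = (l1 * r) * (s - t) by rewrite /s /t; field.
have ksr : kr s U = U - s + s * L by rewrite /kr gt_eqF.
rewrite ksr.
suff : l1 / 2 * r ^+ 2 + l1 / 2 * (w - r) ^+ 2 + l2 * (U - s + s * L)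
   <= l1 / 2 * w ^+ 2 + l2 * kr t U by lra.
suff D0 : 0 <= kr t U - (U - s + s * L) + L * (s - t).
  have : 0 <= l2 * (kr t U - (U - s + s * L) + L * (s - t)) by rewrite mulr_ge0 // ltW.
  rewrite Hr in Hq.
  have E : l2 * (kr t U - (U - s + s * L) + L * (s - t)) =
     l2 * kr t U - l2 * (U - s + s * L) + l2 * L * (s - t) by ring.
  rewrite E. lra.
rewrite /kr; case: eqP => [->|/eqP tn0].
  have : 0 < s by [].
  have -> : U - (U - s + s * L) + L * (s - 0) = s by ring.
  exact: ltW.
have tp : 0 < t by rewrite lt_neqAle eq_sym tn0.
have hL : L = ln (t / U) + ln (s / t).
  rewrite /L -lnM ?posrE ?divr_gt0 //; congr ln.
  by field; rewrite ?gt_eqF //; apply/andP; split; rewrite gt_eqF.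
have := ln_le_sub1 _ (divr_gt0 s0 tp) => hl.
have : t * ln (s / t) <= t * (s / t - 1) by rewrite ler_pM2l.
rewrite mulrBr mulr1 mulrCA mulfV ?mulr1 ?gt_eqF // => h2.
rewrite hL.
have -> : U - t + t * ln (t / U) - (U - s + s * (ln (t / U) + ln (s / t))) +
  (ln (t / U) + ln (s / t)) * (s - t) = s - t - t * ln (s / t) by ring.
lra.
Qed.

End Pt2.
Section OM.
Variable R : realType.
Lemma open_meas2 (O : set (R*R)) : open O -> measurable (O : set (R*R)) /\ (leb2 R O = leb2 R O).
Proof.
move=> oO; split=> //.
set B := fun q : rat * rat * rat =>
  let: (q1, q2, e) := q in
  if `[< 0 < (ratr e : R) /\ ball (ratr q1 : R) (ratr e) `*` ball (ratr q2 : R) (ratr e) `<=` O >]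
  then ball (ratr q1 : R) (ratr e) `*` ball (ratr q2 : R) (ratr e) else set0.
have -> : O = \bigcup_q B q.
  apply/seteqP; split => [x Ox|x [[[q1 q2] e] _]]; last first.
    rewrite /B; case: asboolP => [[_ H]|_ //]; exact: H.
  have : nbhs x O by apply: open_nbhs_nbhs.
  move=> /nbhs_ballP[r r0 /= H].
  have [e /andP[e0 er]] : exists e : rat, 0 < (ratr e : R) < r / 2.
    have : (0 : R) < r / 2 by rewrite divr_gt0.
    by move=> /rat_in_itvoo[e]; rewrite in_itv /= => ?; exists e.
  have [q1 /andP[q1a q1b]] : exists q : rat, x.1 - ratr e < ratr q < x.1 + ratr e.
    have : x.1 - ratr e < x.1 + ratr e by rewrite ltrD2l gtrN.
    by move=> /rat_in_itvoo[q]; rewrite in_itv /= => ?; exists q.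
  have [q2 /andP[q2a q2b]] : exists q : rat, x.2 - ratr e < ratr q < x.2 + ratr e.
    have : x.2 - ratr e < x.2 + ratr e by rewrite ltrD2l gtrN.
    by move=> /rat_in_itvoo[q]; rewrite in_itv /= => ?; exists q.
  exists (q1, q2, e) => //; rewrite /B; case: asboolP => [_|[]].
    by split; rewrite /ball /= ltr_distl; apply/andP; split; lra.
  split => // y [/= y1 y2]; apply: H; split; rewrite /ball /= ltr_distl;
    move: y1 y2; rewrite /ball /= !ltr_distl => /andP[? ?] /andP[? ?];
    apply/andP; split; lra.
apply: countable_bigcupT_measurable; first exact: countableP.
move=> [[q1 q2] e]; rewrite /B; case: asboolP => // _.
by apply: measurableX; exact: measurable_ball.
Qed.
End OM.
Section Gen.
Context d (T : measurableType d) (R : realType).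
Variable mu : {measure set T -> \bar R}.

Lemma minv : measurable_fun [set: R] (@GRing.inv R).
Proof.
rewrite (_ : GRing.inv = fun x : R => if x == 0%R then 0%R else x^-1); last first.
  by apply/funext => x; case: eqP => // ->; rewrite invr0.
apply: measurable_fun_if => //.
  by apply: measurable_fun_eqr => //; exact: measurable_cst.
have -> : [set: R] `&` (fun x : R => x == 0%R) @^-1` [set false] = [set x : R | x != 0%R].
  by apply/seteqP; split => x /=; [move=> [_ /negbT]|move=> /negbTE].
apply: open_continuous_measurable_fun.
  exact: open_neq.
by move=> x; rewrite inE => x0; apply: inv_continuous.
Qed.

Lemma negl_int (D N : set T) (f : T -> \bar R) :
  measurable N -> measurable D -> measurable_fun D f -> mu N = 0%E ->
  (\int[mu]_(x in D) f x = \int[mu]_(x in D `\` N) f x)%E.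
Proof.
move=> mN mD mf N0; rewrite integralE [RHS]integralE.
have h1 := ge0_negligible_integral mN mD (measurable_funepos mf) (fun x _ => funepos_ge0 f x) N0.
have h2 := ge0_negligible_integral mN mD (measurable_funeneg mf) (fun x _ => funeneg_ge0 f x) N0.
by rewrite h1 h2.
Qed.

End Gen.

Section KL.
Context (R : realType).
Lemma mkl (D : set (R * R)) (phi psi : R * R -> R) : measurable D ->
  measurable_fun D phi -> measurable_fun D psi ->
  measurable_fun D (kl_integrand phi psi).
Proof.
move=> mD mphi mpsi; rewrite /kl_integrand.
apply: measurable_fun_if => //.
- by apply: measurable_fun_eqr => //; exact: measurable_cst.
- apply: measurableT_comp => //; apply: measurable_funS mpsi => //.
have mD' : measurable (D `&` (fun x => phi x == 0%R) @^-1` [set false]).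
  by apply: measurable_fun_eqr => //; exact: measurable_cst.
apply: measurable_fun_if => //.
- apply: measurable_fun_eqr => //; try exact: measurable_cst.
  by apply: measurable_funS mpsi => //; exact: subIsetl.
have sub : D `&` (fun x => phi x == 0%R) @^-1` [set false] `&`
    (fun x => psi x == 0%R) @^-1` [set false] `<=` D.
  by move=> x [[]].
apply/measurable_EFinP.
apply: measurable_funD.
  by apply: measurable_funB; [exact: (measurable_funS mD sub mpsi)|exact: (measurable_funS mD sub mphi)].
apply: measurable_funM; first exact: (measurable_funS mD sub mphi).
apply: (measurableT_comp (@measurable_ln R)).
apply: measurable_funM; first exact: (measurable_funS mD sub mphi).
apply: (measurableT_comp (@minv R)).
exact: (measurable_funS mD sub mpsi).
Qed.

End KL.
Lemma muO_fin (R : realType) (O : set (R * R)) : measurable O -> bounded2 O -> (leb2 R O < +oo)%E.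
Proof.
move=> mO [M HM].
have sub : O `<=` [set` `[-M, M]] `*` [set` `[-M, M]].
  move=> x Ox; have [h1 h2] := HM x Ox.
  by split; rewrite /= in_itv /= -ler_norml.
have mB : measurable ([set` `[-M, M]] `*` [set` `[-M, M]] : set (R * R)).
  by apply: measurableX; exact: measurable_itv.
have le1 : (leb2 R O <= leb2 R ([set` `[(-M)%R, M]] `*` [set` `[(-M)%R, M]]))%E.
  by apply: le_measure => //; rewrite inE.
have mI : measurable ([set` `[-M, M]] : set R) by exact: measurable_itv.
have E := product_measure1E (@lebesgue_measure R) (@lebesgue_measure R) mI mI.
pose I : set R := [set` `[-M, M]].
have E' : leb2 R ([set` `[-M, M]] `*` [set` `[-M, M]]) = (lebesgue_measure I * lebesgue_measure I)%E := E.
rewrite E' /I lebesgue_measure_itv /= in le1.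
apply: (le_lt_trans le1).
case: ifPn => _; last by rewrite mul0e ltry.
by rewrite -EFinD -EFinM ltry.
Qed.

Arguments negl_int {d T R} mu {D N f}.
Arguments phiv {R}. Arguments rootv {R}. Arguments kr {R}.

Section Main.
Variables (R : realType) (O : set (R * R)) (f u : R * R -> R) (l1 l2 : R).
Local Notation mu := (leb2 R).
Hypotheses (mO : measurable O) (mf : measurable_fun O f) (mu_ : measurable_fun O u)
  (l10 : (0 < l1)%R) (l20 : (0 < l2)%R).

Definition vs (x : R * R) : R :=
  if (0 < u x)%R then rootv l1 l2 (f x) (u x) else f x.

Lemma vs_le x : (vs x <= f x)%R.
Proof. rewrite /vs; case: ifPn => _ //; exact: rootv_le. Qed.

Lemma mvs : measurable_fun O vs.
Proof.
apply: (measurability _ (RGenOInfty.measurableE R)) => //.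
move=> /= _ [_ [a ->] <-].
pose b x := (((0 < u x) && (a < f x) && (phiv l1 l2 (f x) (u x) a < 0))
   || (~~ (0 < u x) && (a < f x)))%R.
have -> : O `&` vs @^-1` `]a, +oo[%classic = O `&` b @^-1` [set true].
  apply/seteqP; split => x [Ox]; rewrite /= ?in_itv /= ?andbT /vs /b => H; split => //.
  - move: H; case: ifPn => u0 /= H.
      have aF : (a < f x)%R := lt_le_trans H (rootv_le _ _ _ _ _).
      by rewrite aF -(@rootv_gt R l1 l2 l10 l20 _ _ _ u0 aF) H.
    by rewrite H.
  - move: H; case: ifPn => u0.
      rewrite /= orbF => /andP[aF pa].
      by rewrite (@rootv_gt R l1 l2 l10 l20 _ _ _ u0 aF).
    by rewrite /=.
have mb : measurable_fun O b.
  have mu0 : measurable_fun O (fun x => (0 < u x)%R).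
    exact: (measurable_fun_ltr (measurable_cst _) mu_).
  have maf : measurable_fun O (fun x => (a < f x)%R).
    exact: (measurable_fun_ltr (measurable_cst _) mf).
  apply: measurable_or; last exact: measurable_and (measurable_neg mu0) maf.
  apply: measurable_and; first exact: measurable_and mu0 maf.
  apply: (measurable_fun_ltr _ (measurable_cst _)).
  rewrite /phiv; apply: measurable_funB; first exact: measurable_cst.
  apply: measurable_funM; first exact: measurable_cst.
  apply: (measurableT_comp (@measurable_ln R)).
  apply: measurable_funM; first by apply: measurable_funB => //; exact: measurable_cst.
  exact: (measurableT_comp (@minv R)).
exact: mb.
Qed.


Definition Hn (w : R * R -> R) (x : R * R) : \bar R :=
  ((l1 / 2 * w x ^+ 2)%:E + l2%:E * kl_integrand (fun y => (f y - w y)%R) u x)%E.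

Lemma klE (phi psi : R * R -> R) x : (0 < psi x)%R ->
  kl_integrand phi psi x = (kr (phi x) (psi x))%:E.
Proof. by rewrite /kl_integrand /kr => p0; case: ifPn => // _; rewrite gt_eqF. Qed.

Lemma energy_D (w : R * R -> R) (N : set (R * R)) : measurable N -> mu N = 0%E ->
  measurable_fun O w ->
  (forall x, (O `\` N) x -> (0 < u x)%R /\ (w x <= f x)%R) ->
  energy O f u l1 l2 w = (\int[mu]_(x in O `\` N) Hn w x)%E.
Proof.
move=> mN N0 mw H.
have mD : measurable (O `\` N) by exact: measurableD.
have sD : O `\` N `<=` O by move=> x [].
have mw2 : measurable_fun O (fun x => (w x ^+ 2)%:E).
  by apply/measurable_EFinP; exact: measurable_funX.
have mkl' : measurable_fun O (kl_integrand (fun y => (f y - w y)%R) u).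
  by apply: mkl => //; exact: measurable_funB.
have kl0 : forall x, (O `\` N) x -> (0 <= kl_integrand (fun y => (f y - w y)%R) u x)%E.
  move=> x Dx; have [u0 wf] := H x Dx; rewrite klE // lee_fin.
  by apply: kr_ge0 => //; rewrite subr_ge0.
rewrite /energy /DKL (negl_int mu mN mO mw2 N0) (negl_int mu mN mO mkl' N0).
rewrite /Hn ge0_integralD //; last 4 first.
- by move=> x _; rewrite lee_fin mulr_ge0 // ?sqr_ge0 // divr_ge0 // ltW.
- apply/measurable_EFinP; apply: measurable_funM; first exact: measurable_cst.
  exact: measurable_funX (measurable_funS mO sD mw).
- by move=> x Dx; apply: mule_ge0; [rewrite lee_fin ltW|exact: kl0 x Dx].
- exact: measurable_funeM (measurable_funS mO sD mkl').
congr (_ + _)%E.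
- under [RHS]eq_integral do rewrite EFinM.
  rewrite ge0_integralZl //; first exact: measurable_funS mO sD mw2.
  + by move=> x _; rewrite lee_fin sqr_ge0.
  + by rewrite lee_fin divr_ge0 // ltW.
- rewrite ge0_integralZl //; first exact: measurable_funS mO sD mkl'.
  by rewrite lee_fin ltW.
Qed.

Lemma mHn w : measurable_fun O w -> measurable_fun O (Hn w).
Proof.
move=> mw; rewrite /Hn; apply: emeasurable_funD.
  apply/measurable_EFinP; apply: measurable_funM; first exact: measurable_cst.
  exact: measurable_funX.
by apply: measurable_funeM; apply: mkl => //; exact: measurable_funB.
Qed.

Lemma pw x w0 : (0 < u x)%R -> (w0 <= f x)%R ->
  (l1 / 2 * vs x ^+ 2 + l2 * kr (f x - vs x) (u x) + l1 / 2 * (w0 - vs x) ^+ 2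
  <= l1 / 2 * w0 ^+ 2 + l2 * kr (f x - w0) (u x))%R.
Proof.
move=> u0 wf; rewrite /vs u0.
have [rF pr] := @rootvP R l1 l2 l10 l20 (f x) (u x) u0.
exact: key_ineq.
Qed.

Lemma Hn_le w x : (0 < u x)%R -> (w x <= f x)%R ->
  (Hn vs x + (l1 / 2 * (w x - vs x) ^+ 2)%:E <= Hn w x)%E.
Proof.
move=> u0 wf; rewrite /Hn !klE // -!EFinM -!EFinD lee_fin.
have := pw x (w x) u0 wf; lra.
Qed.

Lemma Hn_ge0 w x : (0 < u x)%R -> (w x <= f x)%R -> (0 <= Hn w x)%E.
Proof.
move=> u0 wf; rewrite /Hn klE // -EFinM -EFinD lee_fin.
apply: addr_ge0; first by rewrite mulr_ge0 ?sqr_ge0 // divr_ge0 // ltW.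
by apply: mulr_ge0; [exact: ltW|apply: kr_ge0 => //; rewrite subr_ge0].
Qed.

Lemma vs_bound x M : (0 < u x)%R -> (`|f x| <= M)%R ->
  (l1 / 2 * vs x ^+ 2 + l2 * kr (f x - vs x) (u x) <= l1 / 2 * M ^+ 2 + l2 * u x)%R.
Proof.
move=> u0 fM; have := pw x (f x) u0 (lexx (f x)).
rewrite subrr /kr eqxx.
have h1 : (0 <= l1 / 2 * (f x - vs x) ^+ 2)%R by rewrite mulr_ge0 ?sqr_ge0 // divr_ge0 // ltW.
have h2 : (f x ^+ 2 <= M ^+ 2)%R.
  move: fM; rewrite ler_norml => /andP[ha hb]; nra.
have h3 : (l1 / 2 * f x ^+ 2 <= l1 / 2 * M ^+ 2)%R by rewrite ler_pM2l // divr_gt0.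
fold (kr (f x - vs x) (u x)). lra.
Qed.

Lemma fin_int (N : set (R * R)) (a b : R) : measurable N ->
  (forall x, (O `\` N) x -> (0 < u x)%R) -> mu.-integrable O (EFin \o u) ->
  (mu O < +oo)%E -> (0 <= a)%R -> (0 <= b)%R ->
  (\int[mu]_(x in O `\` N) (a + b * u x)%:E < +oo)%E.
Proof.
move=> mN upos iu muO a0 b0.
have mD : measurable (O `\` N) by exact: measurableD.
have sD : O `\` N `<=` O by move=> x [].
have muD : (mu (O `\` N) <= mu O)%E by apply: le_measure => //; rewrite inE.
under eq_integral do rewrite EFinD.
have h1 : forall x, (O `\` N) x -> (0 <= (a%:E : \bar R))%E by move=> x _; rewrite lee_fin.
have h2 : measurable_fun (O `\` N) (fun _ : R * R => (a%:E : \bar R)) by exact: measurable_cst.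
have h3 : forall x, (O `\` N) x -> (0 <= ((b * u x)%:E : \bar R))%E.
  by move=> x Dx; rewrite lee_fin mulr_ge0 // ltW // upos.
have h4 : measurable_fun (O `\` N) (fun x => ((b * u x)%:E : \bar R)).
  apply/measurable_EFinP; apply: measurable_funM; first exact: measurable_cst.
  exact: measurable_funS mO sD mu_.
rewrite (ge0_integralD mu mD h1 h2 h3 h4).
apply: lte_add_pinfty.
  rewrite (integral_cst mu mD); apply: lte_mul_pinfty; [by rewrite lee_fin|by []|].
  exact: le_lt_trans muD muO.
under eq_integral do rewrite EFinM.
have mu' : measurable_fun (O `\` N) (fun x => (u x)%:E).
  by apply/measurable_EFinP; exact: measurable_funS mO sD mu_.
rewrite (ge0_integralZl mu mD mu'); last 2 first.
- by move=> x Dx; rewrite lee_fin ltW // upos.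
- by rewrite lee_fin.
apply: lte_mul_pinfty; [by rewrite lee_fin|by []|].
have <- : (\int[mu]_(x in O `\` N) `|(u x)%:E| = \int[mu]_(x in O `\` N) (u x)%:E)%E.
  by apply: eq_integral => x /[!inE] Dx; rewrite gee0_abs // lee_fin ltW // upos.
have miu := measurable_int mu iu.
move/integrableP: iu => [_ iu].
apply: le_lt_trans iu.
apply: (ge0_subset_integral mu mD mO) => //.
by apply: measurableT_comp => //.
Qed.

Lemma main_core (M : R) : bounded2 O ->
  {ae mu, forall x, O x -> (`|f x| <= M)%R} -> mu.-integrable O (EFin \o u) ->
  {ae mu, forall x, O x -> (0 < u x)%R} ->
  exists v : R * R -> R,
    classB O f v /\
    (forall w, classB O f w -> (energy O f u l1 l2 v <= energy O f u l1 l2 w)%E) /\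
    (forall w, classB O f w ->
       (forall w', classB O f w' -> (energy O f u l1 l2 w <= energy O f u l1 l2 w')%E) ->
       {ae mu, forall x, O x -> w x = v x}).
Proof.
move=> bO HM iu Hu.
have FF : Filter (nbhs (almost_everywhere mu)) by exact: (ae_filter_ringOfSetsType (leb2 R)).
have muO := @muO_fin R O mO bO.
have getN : forall w : R * R -> R, {ae mu, forall x, O x -> (w x <= f x)%R} ->
    exists N, [/\ measurable N, mu N = 0%E &
      forall x, (O `\` N) x -> [/\ (0 < u x)%R, (w x <= f x)%R & (`|f x| <= M)%R]].
  move=> w Hw.
  have : {ae mu, forall x, O x -> [/\ (0 < u x)%R, (w x <= f x)%R & (`|f x| <= M)%R]}.
    by apply: (@filterS3 _ _ FF _ _ _ _ _ Hu Hw HM) => x h1 h2 h3 Ox; split; [exact: h1|exact: h2|exact: h3].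
  case=> N [mN N0 HN]; exists N; split => // x [Ox nNx].
  apply: contrapT => nP; apply: nNx; apply: HN => /= h; apply: nP; exact: h Ox.
have Hv : {ae mu, forall x, O x -> (vs x <= f x)%R} by apply: aeW => x _; exact: vs_le.
have EVfin : forall N, measurable N -> mu N = 0%E ->
    (forall x, (O `\` N) x -> (0 < u x)%R /\ (`|f x| <= M)%R) ->
    (\int[mu]_(x in O `\` N) Hn vs x < +oo)%E.
  move=> N mN N0 HN.
  have mD : measurable (O `\` N) by exact: measurableD.
  have sD : O `\` N `<=` O by move=> x [].
  apply: le_lt_trans (@fin_int N (l1 / 2 * M ^+ 2) l2 mN _ iu muO _ _); last 3 first.
  - by move=> x Dx; have [] := HN x Dx.
  - by rewrite mulr_ge0 ?sqr_ge0 // divr_ge0 // ltW.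
  - exact: ltW.
  apply: ge0_le_integral => //.
  - by move=> x Dx; have [u0 _] := HN x Dx; apply: Hn_ge0 => //; exact: vs_le.
  - exact: measurable_funS mO sD (mHn vs mvs).
  - apply/measurable_EFinP; apply: measurable_funD; first exact: measurable_cst.
    apply: measurable_funM; first exact: measurable_cst.
    exact: measurable_funS mO sD mu_.
  move=> x Dx; have [u0 fM] := HN x Dx.
  rewrite /Hn klE // -EFinM -EFinD lee_fin.
  exact: vs_bound.
have vB : classB O f vs.
  split; last exact: Hv.
  split; first exact: mvs.
  have [N [mN N0 HN]] := getN vs Hv.
  have mD : measurable (O `\` N) by exact: measurableD.
  have sD : O `\` N `<=` O by move=> x [].
  have mv2 : measurable_fun O (fun x => (vs x ^+ 2)%:E).
    by apply/measurable_EFinP; exact: measurable_funX mvs.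
  rewrite (negl_int mu mN mO mv2 N0).
  apply: le_lt_trans (@fin_int N (M ^+ 2) (2 * l2 / l1) mN _ iu muO _ _); last 3 first.
  - by move=> x Dx; have [] := HN x Dx.
  - exact: sqr_ge0.
  - by rewrite divr_ge0 // ?mulr_ge0 // ltW.
  apply: ge0_le_integral => //.
  - by move=> x _; rewrite lee_fin sqr_ge0.
  - exact: measurable_funS mO sD mv2.
  - apply/measurable_EFinP; apply: measurable_funD; first exact: measurable_cst.
    apply: measurable_funM; first exact: measurable_cst.
    exact: measurable_funS mO sD mu_.
  move=> x Dx; have [u0 _ fM] := HN x Dx; rewrite lee_fin.
  have h := vs_bound x M u0 fM.
  have k0 : (0 <= kr (f x - vs x) (u x))%R by apply: kr_ge0 => //; rewrite subr_ge0 vs_le.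
  have k1 : (0 <= l2 * kr (f x - vs x) (u x))%R by rewrite mulr_ge0 // ltW.
  have h' : (l1 / 2 * vs x ^+ 2 <= l1 / 2 * M ^+ 2 + l2 * u x)%R by lra.
  have l1n : l1 != 0%R by rewrite gt_eqF.
  have -> : (M ^+ 2 + 2 * l2 / l1 * u x = (2 / l1) * (l1 / 2 * M ^+ 2 + l2 * u x))%R.
    by field.
  have -> : (vs x ^+ 2 = (2 / l1) * (l1 / 2 * vs x ^+ 2))%R by field.
  by rewrite ler_pM2l // divr_gt0.
exists vs; split => //; split.
- move=> w [[mw _] Hw].
  have [N [mN N0 HN]] := getN w Hw.
  have mD : measurable (O `\` N) by exact: measurableD.
  have sD : O `\` N `<=` O by move=> x [].
  have cw : forall x, (O `\` N) x -> (0 < u x)%R /\ (w x <= f x)%R.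
    by move=> x Dx; have [? ? _] := HN x Dx.
  have cv : forall x, (O `\` N) x -> (0 < u x)%R /\ (vs x <= f x)%R.
    by move=> x Dx; have [? _ _] := HN x Dx; split => //; exact: vs_le.
  rewrite (energy_D _ _ mN N0 mvs cv) (energy_D _ _ mN N0 mw cw).
  apply: ge0_le_integral => //.
  - by move=> x Dx; have [u0 vf] := cv x Dx; exact: Hn_ge0.
  - exact: measurable_funS mO sD (mHn vs mvs).
  - exact: measurable_funS mO sD (mHn w mw).
  move=> x Dx; have [u0 wf] := cw x Dx.
  apply: le_trans (Hn_le w x u0 wf).
  by rewrite leeDl // lee_fin mulr_ge0 ?sqr_ge0 // divr_ge0 // ltW.
- move=> w [[mw _] Hw] wmin.
  have [N [mN N0 HN]] := getN w Hw.
  have mD : measurable (O `\` N) by exact: measurableD.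
  have sD : O `\` N `<=` O by move=> x [].
  have cw : forall x, (O `\` N) x -> (0 < u x)%R /\ (w x <= f x)%R.
    by move=> x Dx; have [? ? _] := HN x Dx.
  have cv : forall x, (O `\` N) x -> (0 < u x)%R /\ (vs x <= f x)%R.
    by move=> x Dx; have [? _ _] := HN x Dx; split => //; exact: vs_le.
  have EW := wmin vs vB.
  rewrite (energy_D _ _ mN N0 mvs cv) (energy_D _ _ mN N0 mw cw) in EW.
  pose Q x := ((l1 / 2 * (w x - vs x) ^+ 2)%:E : \bar R).
  have mQ : measurable_fun (O `\` N) Q.
    apply/measurable_EFinP; apply: measurable_funM; first exact: measurable_cst.
    apply: measurable_funX; apply: measurable_funB.
      exact: measurable_funS mO sD mw.
    exact: measurable_funS mO sD mvs.
  have Q0 : forall x, (O `\` N) x -> (0 <= Q x)%E.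
    by move=> x _; rewrite lee_fin mulr_ge0 ?sqr_ge0 // divr_ge0 // ltW.
  have Hv0 : forall x, (O `\` N) x -> (0 <= Hn vs x)%E.
    by move=> x Dx; have [u0 vf] := cv x Dx; exact: Hn_ge0.
  have mHv : measurable_fun (O `\` N) (Hn vs) by exact: measurable_funS mO sD (mHn vs mvs).
  have I1 : (\int[mu]_(x in O `\` N) (Hn vs x + Q x) <= \int[mu]_(x in O `\` N) Hn w x)%E.
    apply: ge0_le_integral => //.
    - by move=> x Dx; apply: adde_ge0; [exact: Hv0|exact: Q0].
    - exact: emeasurable_funD.
    - exact: measurable_funS mO sD (mHn w mw).
    by move=> x Dx; have [u0 wf] := cw x Dx; exact: (Hn_le w x u0 wf).
  rewrite (ge0_integralD mu mD Hv0 mHv Q0 mQ) in I1.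
  have fin : (\int[mu]_(x in O `\` N) Hn vs x)%E \is a fin_num.
    rewrite ge0_fin_numE; last exact: integral_ge0.
    by apply: EVfin => // x Dx; have [? _ ?] := HN x Dx.
  have J0 : (\int[mu]_(x in O `\` N) Q x <= 0)%E.
    have := le_trans I1 EW.
    by rewrite -[X in (_ <= X)%E]adde0 leeD2lE.
  have J00 : (\int[mu]_(x in O `\` N) Q x = 0)%E.
    by apply/le_anti; rewrite J0 integral_ge0.
  have : (\int[mu]_(x in O `\` N) `|Q x| = 0)%E.
    rewrite -J00; apply: eq_integral => x /[!inE] Dx; rewrite gee0_abs //; exact: Q0.
  move/(ae_eq_integral_abs mu mD mQ) => aeQ.
  have nN : {ae mu, forall x, ~ N x}.
    by exists N; split => // x /= nnN; exact: contrapT nnN.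
  apply: (@filterS2 _ _ FF _ _ _ _ aeQ nN) => x hQ nNx Ox.
  move: (hQ (conj Ox nNx)); rewrite /Q /= => /eqP; rewrite eqe mulf_eq0 sqrf_eq0 subr_eq0.
  case/orP => [|/eqP //].
  by rewrite mulf_eq0 invr_eq0 pnatr_eq0 /= orbF gt_eqF.
Qed.

End Main.

Theorem proposition2p2 (R : realType) (O : set (R * R)) (f u : R * R -> R)
    (l1 l2 : R) :
  open O -> bounded2 O -> lipschitz_boundary O ->
  Linf O f -> 0 < l1 -> 0 < l2 ->
  BV O u -> classA O u ->
  exists v : R * R -> R,
    classB O f v /\
    (forall w, classB O f w -> (energy O f u l1 l2 v <= energy O f u l1 l2 w)%E) /\
    (forall w, classB O f w ->
       (forall w', classB O f w' -> (energy O f u l1 l2 w <= energy O f u l1 l2 w')%E) ->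
       {ae leb2 R, forall x, O x -> w x = v x}).
Proof.
move=> oO bO _ [mf [M HM]] l10 l20 _ [iu [Hu _]].
have mO := (@open_meas2 R O oO).1.
have mu_ : measurable_fun O u by apply/measurable_EFinP; exact: measurable_int _ iu.
exact: (@main_core R O f u l1 l2 mO mf mu_ l10 l20 M bO HM iu Hu).
Qed.
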